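(* Let $(\Omega,\mathcal F,\mu)$ be a measure space and $\mathscr A\subset L^\infty(\Omega,\mathcal F,\mu)$. The following are equivalent: (i) $\mathscr A$ is uniformly approximable in $L^\infty$; (ii) $\sup_{f\in\mathscr A}\mathcal N(f,\varepsilon)<\infty$ for every $\varepsilon>0$. In this case $N_{\infty,\varepsilon}(\mathscr A)=\sup_{f\in\mathscr A}\mathcal N(f,\varepsilon)$ for every $\varepsilon>0$.
   Context: All measures are assumed not identically zero. $\mathscr G_{\infty,k}$ is the set of functions $\sum_{i=1}^l a_i\mathbf 1_{A_i}$ with $l\le k$, $\{A_i\}$ a measurable partition of $\Omega$, $a_i\in\mathbb R$. For $\mathscr A\subset L^\infty$, $N_{\infty,\varepsilon}(\mathscr A)=\inf\{k\ge1:\ \forall f\in\mathscr A\ \exists h\in\mathscr G_{\infty,k},\ \|f-h\|_\infty\le\varepsilon\}$ ($\inf\emptyset=\infty$); $\mathscr A$ is uniformly approximable if $N_{\infty,\varepsilon}(\mathscr A)<\infty$ for all $\varepsilon>0$. For $M\subset\mathbb R$, $\mathcal N(M,\varepsilon)$ is the least number of closed intervals of radius $\varepsilon$ covering $M$. For a measurable $f$, $\mathcal N(f,\varepsilon)=\inf\{\mathcal N(g(\Omega),\varepsilon):\ g \text{ measurable},\ g=f\ \mu\text{-a.e.}\}$. *)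

(* Defs.v *)
From HB Require Import structures.
From mathcomp Require Import all_boot all_order all_algebra.
From mathcomp Require Import all_classical all_reals all_analysis.
Set Implicit Arguments. Unset Strict Implicit. Unset Printing Implicit Defensive.
Import Order.TTheory GRing.Theory Num.Theory.
Import numFieldNormedType.Exports.
Local Open Scope classical_set_scope.
Local Open Scope ring_scope.

Section defs.
Context {d : measure_display} {T : measurableType d} {R : realType}.
Variable mu : {measure set T -> \bar R}.

(* L^infinity(mu): measurable functions with finite essential sup norm
   (we work with representatives; all notions below are a.e.-invariant). *)
Definition inLinf (f : T -> R) : Prop :=
  measurable_fun [set: T] f /\ (Lnorm mu +oo%E (EFin \o f) < +oo)%E.

Definition Linf_dist (f h : T -> R) : \bar R := Lnorm mu +oo%E (EFin \o (f \- h)).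

Definition G_inf (k : nat) : set (T -> R) :=
  [set h | exists (l : nat) (A : 'I_l -> set T) (a : 'I_l -> R),
      (l <= k)%N /\ (forall i, measurable (A i)) /\
      (forall i j, i != j -> A i `&` A j = set0) /\
      \bigcup_(i in [set: 'I_l]) A i = [set: T] /\
      h = (fun x => \sum_(i < l) a i * \1_(A i) x)].

(* N_{oo,eps}(calA), with inf of the empty set = +oo *)
Definition N_inf (calA : set (T -> R)) (eps : R) : \bar R :=
  ereal_inf [set (k%:R)%:E | k in
     [set k : nat | (1 <= k)%N /\ forall f, calA f ->
        exists2 h, G_inf k h & (Linf_dist f h <= eps%:E)%E]].

Definition uniformly_approximable (calA : set (T -> R)) : Prop :=
  forall eps : R, 0 < eps -> (N_inf calA eps < +oo)%E.

End defs.

Definition Ncov {R : realType} (M : set R) (eps : R) : \bar R :=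
  ereal_inf [set (n%:R)%:E | n in
     [set n : nat | exists c : 'I_n -> R,
        M `<=` \bigcup_(i in [set: 'I_n]) `[c i - eps, c i + eps]%classic]].

Definition Nfun {d : measure_display} {T : measurableType d} {R : realType}
    (mu : {measure set T -> \bar R}) (f : T -> R) (eps : R) : \bar R :=
  ereal_inf [set Ncov (range g) eps | g in
     [set g : T -> R | measurable_fun [set: T] g /\ {ae mu, forall x, g x = f x}]].

(* Main.v *)
Require Import Defs.
From HB Require Import structures.
From mathcomp Require Import all_boot all_order all_algebra.
From mathcomp Require Import all_classical all_reals all_analysis.
From mathcomp Require Import ess_sup_inf.
Import Order.TTheory GRing.Theory Num.Theory.
Import numFieldNormedType.Exports.
Local Open Scope classical_set_scope.
Local Open Scope ring_scope.

Section H.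
Context (d : measure_display) (T : measurableType d) (R : realType)
    (mu : {measure set T -> \bar R}).

Lemma Linf_leP (f h : T -> R) (e : R) : (0 < mu [set: T])%E ->
  (Linf_dist mu f h <= e%:E)%E <-> {ae mu, forall x, `|f x - h x| <= e}.
Proof.
move=> mu0; rewrite /Linf_dist unlock /= mu0; split.
  move/ess_supP => H; apply: filterS H => x /=; by rewrite lee_fin.
move=> H; apply/ess_supP; apply: filterS H => x /=; by rewrite lee_fin.
Qed.

Lemma sum_indic_part l (A : 'I_l -> set T) (a : 'I_l -> R) i x :
  (forall i j, i != j -> A i `&` A j = set0) -> A i x ->
  \sum_(j < l) a j * \1_(A j) x = a i.
Proof.
move=> dA Aix; rewrite (bigD1 i) //= big1 => [|j ji].
  by rewrite indicE mem_set // mulr1 addr0.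
rewrite indicE memNset ?mulr0 // => Ajx.
have E : A i `&` A j = set0 by apply: dA; rewrite eq_sym.
have : (A i `&` A j) x by [].
by rewrite E.
Qed.

Lemma Nfun_le (mu0 : (0 < mu [set: T])%E) f h k e : 0 <= e ->
  measurable_fun setT f -> G_inf k h -> (Linf_dist mu f h <= e%:E)%E ->
  (Nfun mu f e <= (k%:R)%:E)%E.
Proof.
move=> e0 mf [l [A [a [lk [mA [dA [cA hE]]]]]]] /(Linf_leP _ _ _ mu0) fh.
have mh : measurable_fun setT h.
  rewrite hE; apply: measurable_sum => i; apply: measurable_realfun.measurable_funM.
    exact: measurable_cst.
  exact: measurable_realfun.measurable_indic.
pose g x := h x + Num.max (- e) (Num.min e (f x - h x)).
have mg : measurable_fun setT g.
  apply: measurable_realfun.measurable_funD => //; apply: measurable_realfun.measurable_maxr; first exact: measurable_cst.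
  apply: measurable_realfun.measurable_minr; first exact: measurable_cst.
  by apply: measurable_realfun.measurable_funB.
apply: (@le_trans _ _ (Ncov (range g) e)).
  apply: ereal_inf_lbound; exists g => //; split => //.
  apply: filterS fh => x; rewrite ler_norml => /andP[h1 h2].
  by rewrite /g min_r // max_r // addrC subrK.
apply: (@le_trans _ _ (l%:R)%:E); last by rewrite lee_fin ler_nat.
apply: ereal_inf_lbound; exists l => //; exists a => _ [x _ <-].
have : [set: T] x by [].
rewrite -cA => -[i _ Aix]; exists i => //=.
have hx : h x = a i by rewrite hE; exact: sum_indic_part.
rewrite in_itv /= /g hx lerD2l lerD2l le_max ge_max ge_min lexx le_min.
rewrite (@le_trans _ _ 0 (- e) e) ?oppr_le0 //=.
by case: (lerP (-e) (f x - h x)) => /= _; rewrite ?lexx ?orbT ?orbF.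
Qed.

Lemma Nfun_ge1 (x0 : T) f e : (1%:E <= Nfun mu f e)%E.
Proof.
apply/ereal_infP => _ [g _ <-]; apply/ereal_infP => _ [n [c Hc] <-].
have [i _ _] := Hc (g x0) (ex_intro2 _ _ x0 I erefl).
by rewrite lee_fin ler1n (leq_ltn_trans _ (ltn_ord i)).
Qed.

Lemma approx_of_Nfun (mu0 : (0 < mu [set: T])%E) f e n :
  (Nfun mu f e < (n.+1%:R)%:E)%E ->
  exists2 h, G_inf n h & (Linf_dist mu f h <= e%:E)%E.
Proof.
move=> /ereal_inf_ltP [_ [g [mg gf] <-]] /ereal_inf_ltP [_ [m [c Hc] <-]].
rewrite lte_fin ltr_nat ltnS => mn.
pose Itv (i : 'I_m) : set R := `[c i - e, c i + e]%classic.
pose B (i : 'I_m) : set R := Itv i `\` \bigcup_(j in [set j : 'I_m | (j < i)%N]) Itv j.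
pose A i := g @^-1` B i.
have mA i : measurable (A i).
  rewrite /A -[_ @^-1` _]setTI; apply: mg => //.
  apply: measurableD; first exact: measurable_itv.
  by apply: fin_bigcup_measurable => [|j _]; [exact: finite_finset|exact: measurable_itv].
have dA i j : i != j -> A i `&` A j = set0.
  move=> ij; apply/seteqP; split => // x [Aix Ajx].
  case: (ltngtP i j) => [lij|lji|/val_inj eij]; last by rewrite eij eqxx in ij.
  - by case: Ajx => _; apply; exists i => //; case: Aix.
  - by case: Aix => _; apply; exists j => //; case: Ajx.
have cA x : exists i, A i x.
  have [i0 _ Hi0] := Hc (g x) (ex_intro2 _ _ x I erefl).
  case: (@arg_minnP _ i0 (fun i => `[< Itv i (g x) >]) (fun i => nat_of_ord i)).
    by apply/asboolP.
  move=> i /asboolP Ii Hmin; exists i; split => // -[j /= ji Ij].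
  by have := Hmin j (asboolT Ij); rewrite leqNgt ji.
exists (fun x => \sum_(i < m) c i * \1_(A i) x).
  exists m, A, c; split => //; split => //; split => //; split => //.
  by apply/seteqP; split => // x _; have [i Ai] := cA x; exists i.
apply/(Linf_leP _ _ _ mu0); apply: filterS gf => x gfx.
have [i Aix] := cA x; rewrite (@sum_indic_part _ A c i x dA Aix) -gfx ler_distl.
case: Aix => /= + _.
by rewrite /Itv /= in_itv /= => /andP[-> ->].
Qed.
End H.

Theorem theorem4p10 (d : measure_display) (T : measurableType d) (R : realType)
    (mu : {measure set T -> \bar R}) (calA : set (T -> R))
    (mu_nz : exists A : set T, measurable A /\ mu A <> 0%E)
    (hA : forall f, calA f -> inLinf mu f) :
  (uniformly_approximable mu calA <->
     (forall eps : R, 0 < eps ->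
        (ereal_sup [set Nfun mu f eps | f in calA] < +oo)%E)) /\
  (calA !=set0 -> uniformly_approximable mu calA ->
     forall eps : R, 0 < eps ->
       N_inf mu calA eps = ereal_sup [set Nfun mu f eps | f in calA]).
Proof.
have [A0 [mA0 muA0]] := mu_nz.
have muA0p : (0 < mu A0)%E by rewrite lt0e measure_ge0 andbT; apply/eqP.
have mu0 : (0 < mu [set: T])%E.
  by apply: (lt_le_trans muA0p); apply: le_measure; rewrite ?inE.
have [x0 _] : A0 !=set0.
  by apply/set0P/eqP => A00; apply: muA0; rewrite A00 measure0.
pose S eps := ereal_sup [set Nfun mu f eps | f in calA].
have le1 eps : 0 < eps -> (S eps <= N_inf mu calA eps)%E.
  move=> e0; apply/ereal_infP => _ [k [k1 Hk] <-]; apply/ereal_supP => _ [f Af <-].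
  have [h Gh dh] := Hk f Af.
  by apply: (@Nfun_le _ _ _ mu mu0 f h k eps (ltW e0) (hA f Af).1 Gh dh).
have le2 eps r (K : nat) : (1 <= K)%N -> (S eps <= r%:E)%E -> r < K.+1%:R ->
    (N_inf mu calA eps <= (K%:R)%:E)%E.
  move=> K1 Sr rK; apply: ereal_inf_lbound; exists K => //; split => // f Af.
  apply: (@approx_of_Nfun _ _ _ mu mu0).
  apply: (@le_lt_trans _ _ (S eps)); first by apply: ereal_sup_ubound; exists f.
  by apply: (le_lt_trans Sr); rewrite lte_fin.
split.
  split => [UA eps e0|HS eps e0].
    by apply: (le_lt_trans (le1 eps e0)); exact: UA.
  have [r Sr] : exists r, (S eps <= r%:E)%E.
    move: (HS eps e0); rewrite -/(S eps).
    by case: (S eps) => [r _|//|_]; [exists r|exists 0]; rewrite ?leNye.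
  apply: (@le_lt_trans _ _ ((Num.truncn `|r|).+1%:R)%:E); last exact: ltry.
  apply: (le2 _ r) => //.
  apply: (le_lt_trans (ler_norm r)); apply: (lt_trans (Num.Theory.truncnS_gt _)).
  by rewrite ltr_nat.
move=> [f0 Af0] UA eps e0; rewrite -/(S eps).
apply/eqP; rewrite eq_le le1 // andbT.
have S1 : (1%:E <= S eps)%E.
  apply: (le_trans (@Nfun_ge1 _ _ _ mu x0 f0 eps)).
  by apply: ereal_sup_ubound; exists f0.
have Soo : (S eps < +oo)%E by apply: (le_lt_trans (le1 eps e0)); exact: UA.
move: S1 Soo (le2 eps) ; case: (S eps) => [r| |] //; rewrite lee_fin => r1 _ H.
have r0 : 0 <= r by apply: le_trans r1.
have /andP[Kr rK] := Num.Theory.truncn_itv r0.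
apply: (le_trans (H r (Num.truncn r) _ (lexx _) rK)); last by rewrite lee_fin.
by have := le_lt_trans r1 rK; rewrite -[1]/(1%:R) ltr_nat.
Qed.
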